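(* Assume the setup below. Suppose that at time $t_0$ the set $\{\delta X(s,\alpha(t_0)):s\in T\}$ satisfies Condition B at the point $0$ with constants $m_0\ge0$, $\kappa>1$, $\delta>0$, $\sigma>0$, $I_0>0$. Let $0<\eta\le I_0$ and $0<\delta_0<\delta$ with $\nu(G_\eta(t_0))>1-\delta_0$. Then for every $\ell$ with $0<\ell\le\eta$, $$\nu\big(\{s\in T:0\le\delta X(s,\alpha(t_0))<\ell\}\big)<m_0+\delta_0\,(1+\sigma)\left(\frac{\ell}{\eta}\right)^{\log(1+\sigma)/\log\kappa}.$$
   Context: Setup. Fix integers $n\ge1$, $K\ge 2$. $T\subset\mathbb R^n$ is a finite set; each $s\in T$ has a class $i(s)\in\{1,\dots,K\}$ and a weight $\nu(s)\in(0,1]$ with $\sum_{s\in T}\nu(s)=1$; for $A\subset T$, $\nu(A)=\sum_{s\in A}\nu(s)$. A parametrized family $X(\cdot,\alpha):\mathbb R^n\to\mathbb R^K$ is given; $\delta X(s,\alpha)=X_{i(s)}(s,\alpha)-\max_{j\ne i(s)}X_j(s,\alpha)$. A training trajectory is a family of parameters $\alpha(t)$ indexed by times $t$. Good set: $G_\eta(t)=\{s\in T:\delta X(s,\alpha(t))>\eta\}$. For an interval $I\subset\mathbb R$ with center $c$ and $\lambda>0$, $\lambda I=\{c+\lambda(x-c):x\in I\}$; $|I|$ is the length of $I$. Condition B at the point $0$ at time $t_0$ with constants $m_0\ge0$, $\kappa>1$, $\delta>0$, $\sigma>0$, $I_0>0$: for every interval $I\subset\mathbb R$ containing $0$ with $|I|<I_0$,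 $$\nu(\{s\in T:\delta X(s,\alpha(t_0))\in\kappa I\})\ge\min\Big\{\delta,\ \max\big\{m_0,\ (1+\sigma)\,\nu(\{s\in T:\delta X(s,\alpha(t_0))\in I\})\big\}\Big\}.$$ *)

(* Defs.v *)
From Stdlib Require Import Reals Lra List Arith ClassicalEpsilon.
From Stdlib Require Fin.
Open Scope R_scope.

Definition Rn (n : nat) : Type := Fin.t n -> R.

(* Weighted measure nu(A) = sum_{s in T, P s} nu(s), T given as a duplicate-free list. *)
Definition nu_of {S : Type} (T : list S) (nu : S -> R) (P : S -> Prop) : R :=
  fold_right (fun s acc =>
    (if excluded_middle_informative (P s) then nu s else 0) + acc) 0 T.

(* max_{j in {1..K}, j <> i} x j  (K >= 2 guarantees non-emptiness). *)
Definition max_other (K i : nat) (x : nat -> R) : R :=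
  match filter (fun j => negb (Nat.eqb j i)) (seq 1 K) with
  | nil => 0
  | j0 :: js => fold_right (fun j m => Rmax (x j) m) (x j0) js
  end.

(* delta X(s, alpha) = X_{i(s)}(s, alpha) - max_{j <> i(s)} X_j(s, alpha);
   classes/components indexed 1..K. *)
Definition deltaX {n : nat} {P : Type} (K : nat) (cls : Rn n -> nat)
  (X : Rn n -> P -> nat -> R) (s : Rn n) (a : P) : R :=
  X s a (cls s) - max_other K (cls s) (X s a).

(* An interval of R with endpoints a <= b; ca / cb say whether the left / right
   endpoint is included. *)
Definition in_interval (a b : R) (ca cb : bool) (x : R) : Prop :=
  (a < x \/ (ca = true /\ x = a)) /\ (x < b \/ (cb = true /\ x = b)).

(* For I with endpoints a<=b, the
   dilation lambda I about its center c=(a+b)/2 has endpoints c+lambda(a-c),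
   c+lambda(b-c) (same endpoint types); |I| = b - a. *)
Definition conditionB {S : Type} (T : list S) (nu : S -> R) (d : S -> R)
  (m0 kappa delta sigma I0 : R) : Prop :=
  forall (a b : R) (ca cb : bool),
    a <= b -> in_interval a b ca cb 0 -> b - a < I0 ->
    let c := (a + b) / 2 in
    nu_of T nu (fun s => in_interval (c + kappa * (a - c)) (c + kappa * (b - c)) ca cb (d s))
    >= Rmin delta (Rmax m0 ((1 + sigma) * nu_of T nu (fun s => in_interval a b ca cb (d s)))).

(* Main.v *)
Require Import Defs.
From Stdlib Require Import Reals List Lra Lia ClassicalEpsilon.
Open Scope R_scope.

Lemma nu_of_ext {S : Type} (T : list S) nu (P Q : S -> Prop) :
  (forall s, In s T -> (P s <-> Q s)) -> nu_of T nu P = nu_of T nu Q.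
Proof.
  induction T as [|a T IH]; intros H; simpl; auto.
  rewrite IH by (intros; apply H; simpl; auto).
  destruct (excluded_middle_informative (P a)) as [Hp|Hp], (excluded_middle_informative (Q a)) as [Hq|Hq];
  auto; exfalso; [apply Hq | apply Hp]; apply H; simpl; auto.
Qed.

Lemma nu_of_mono {S : Type} (T : list S) nu (P Q : S -> Prop) :
  (forall s, In s T -> 0 <= nu s) ->
  (forall s, In s T -> P s -> Q s) -> nu_of T nu P <= nu_of T nu Q.
Proof.
  induction T as [|a T IH]; intros Hn H; simpl; [lra|].
  assert (IH' : nu_of T nu P <= nu_of T nu Q)
    by (apply IH; intros; [apply Hn|apply H]; simpl; auto).
  unfold nu_of in IH' |- *; simpl.
  assert (0 <= nu a) by (apply Hn; simpl; auto).
  destruct (excluded_middle_informative (P a)) as [Hp|Hp], (excluded_middle_informative (Q a)) as [Hq|Hq]; try lra.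
  exfalso; apply Hq; apply H; simpl; auto.
Qed.

Lemma nu_of_compl {S : Type} (T : list S) nu (P : S -> Prop) :
  nu_of T nu P + nu_of T nu (fun s => ~ P s) = nu_of T nu (fun _ => True).
Proof.
  induction T as [|a T IH]; simpl; [lra|].
  unfold nu_of in IH |- *; simpl.
  destruct (excluded_middle_informative (P a)), (excluded_middle_informative (~ P a)),
    (excluded_middle_informative True); tauto || lra.
Qed.

Lemma find_N (k l e : R) : 1 < k -> 0 < l -> l <= e ->
  exists N : nat, l * k ^ N <= e /\ e <= l * k ^ (S N).
Proof.
  intros Hk Hl Hle.
  assert (Hex : exists m, e <= l * k ^ (S m)).
  { destruct (Pow_x_infinity k) with (b := e / l) as [M HM].
    - rewrite Rabs_pos_eq; lra.
    - exists M. specialize (HM (S M) ltac:(lia)).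
      rewrite Rabs_pos_eq in HM by (apply pow_le; lra).
      apply Rge_le in HM.
      apply (Rmult_le_compat_l l) in HM; [|lra].
      replace (l * (e / l)) with e in HM by (field; lra). exact HM. }
  destruct Hex as [m Hm]. revert Hm. induction m as [|m IH]; intros Hm.
  - exists 0%nat. simpl. lra.
  - destruct (Rle_lt_dec e (l * k ^ S m)) as [H|H].
    + apply IH; exact H.
    + exists (S m). split; lra.
Qed.

Theorem mainTheorem7
  (n K : nat) (HK : (2 <= K)%nat)
  (T : list (Rn n)) (HT : NoDup T)
  (cls : Rn n -> nat) (Hcls : forall s, In s T -> (1 <= cls s <= K)%nat)
  (nu : Rn n -> R) (Hnu : forall s, In s T -> 0 < nu s <= 1)
  (Hsum : nu_of T nu (fun _ => True) = 1)
  (Param : Type) (X : Rn n -> Param -> nat -> R) (alpha : R -> Param) (t0 : R)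
  (m0 kappa delta sigma I0 : R)
  (Hm0 : 0 <= m0) (Hkappa : 1 < kappa) (Hdelta : 0 < delta) (Hsigma : 0 < sigma) (HI0 : 0 < I0)
  (HB : conditionB T nu (fun s => deltaX K cls X s (alpha t0)) m0 kappa delta sigma I0)
  (eta delta0 : R) (Heta : 0 < eta <= I0) (Hdelta0 : 0 < delta0 < delta)
  (HG : nu_of T nu (fun s => deltaX K cls X s (alpha t0) > eta) > 1 - delta0) :
  forall l : R, 0 < l <= eta ->
    nu_of T nu (fun s => 0 <= deltaX K cls X s (alpha t0) < l)
    < m0 + delta0 * (1 + sigma) * Rpower (l / eta) (ln (1 + sigma) / ln kappa).
Proof.
  intros l Hl.
  set (d := fun s => deltaX K cls X s (alpha t0)).
  change (nu_of T nu (fun s => d s > eta) > 1 - delta0) in HG.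
  change (conditionB T nu d m0 kappa delta sigma I0) in HB.
  change (nu_of T nu (fun s => 0 <= d s < l)
    < m0 + delta0 * (1 + sigma) * Rpower (l / eta) (ln (1 + sigma) / ln kappa)).
  assert (Hnn : forall s, In s T -> 0 <= nu s) by (intros s Hs; specialize (Hnu s Hs); lra).
  assert (Hbad : nu_of T nu (fun s => d s <= eta) < delta0).
  { pose proof (nu_of_compl T nu (fun s => d s > eta)) as Hc; cbv beta in Hc.
    assert (Heq : nu_of T nu (fun s => ~ d s > eta) = nu_of T nu (fun s => d s <= eta))
      by (apply nu_of_ext; intros; lra).
    lra. }
  destruct (find_N kappa l eta Hkappa ltac:(lra) ltac:(lra)) as [N [HN1 HN2]].
  set (c := l / 2).
  set (V := fun j : nat => nu_of T nu
        (fun s => in_interval (c - c * kappa ^ j) (c + c * kappa ^ j) true false (d s))).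
  assert (Hkp : forall j, 1 <= kappa ^ j).
  { intros j. replace 1 with (kappa ^ 0) by (simpl; lra). apply Rle_pow; [lra|lia]. }
  assert (Hmono : forall j, (j <= N)%nat -> V j <= V N).
  { intros j Hj. apply nu_of_mono; auto.
    intros s _ [Ha Hb].
    pose proof (Rle_pow kappa j N ltac:(lra) Hj).
    assert (0 < c) by (unfold c; lra).
    assert (c*kappa^j <= c*kappa^N) by (apply Rmult_le_compat_l; lra).
    split.
    - destruct Ha as [Ha1|[_ Ha1]]; [left; lra|].
      destruct (Rlt_le_dec (c*kappa^j) (c*kappa^N)); [left; lra|right; split; [reflexivity|lra]].
    - left. destruct Hb as [Hb2|[Hb2 _]]; [lra|discriminate]. }
  assert (HVN : V N < delta0).
  { eapply Rle_lt_trans; [|exact Hbad]. apply nu_of_mono; auto.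
    intros s _ [_ [H2|[H2 _]]]; try discriminate. unfold c in H2. lra. }
  assert (Hstep : forall j, (j < N)%nat -> (1 + sigma) * V j <= V (S j)).
  { intros j Hj.
    assert (0 < c) by (unfold c; lra).
    pose proof (Hkp j) as Hkj.
    assert (Hlen : l * kappa ^ j < eta).
    { assert (kappa ^ S j <= kappa ^ N) by (apply Rle_pow; [lra|lia]).
      simpl in H0. nra. }
    specialize (HB (c - c * kappa ^ j) (c + c * kappa ^ j) true false
      ltac:(nra)).
    assert (Hin : in_interval (c - c * kappa ^ j) (c + c * kappa ^ j) true false 0).
    { split.
      - destruct (Rle_lt_dec (c * kappa ^ j) c) as [Hc|Hc].
        + right; split; auto. nra.
        + left; lra.
      - left; nra. }
    specialize (HB Hin ltac:(unfold c in *; nra)). cbv zeta in HB.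
    replace ((c - c * kappa ^ j + (c + c * kappa ^ j)) / 2) with c in HB by field.
    rewrite (nu_of_ext T nu _ (fun s => in_interval (c - c * kappa ^ S j)
         (c + c * kappa ^ S j) true false (d s))) in HB.
    2:{ intros s _. simpl.
        replace (c + kappa * (c - c * kappa ^ j - c)) with (c - c * (kappa * kappa ^ j)) by ring.
        replace (c + kappa * (c + c * kappa ^ j - c)) with (c + c * (kappa * kappa ^ j)) by ring.
        tauto. }
    fold (V (S j)) in HB. fold (V j) in HB.
    assert (V (S j) < delta) by (pose proof (Hmono (S j) Hj); lra).
    apply Rge_le in HB.
    unfold Rmin, Rmax in HB.
    destruct (Rle_dec delta _); [lra|].
    destruct (Rle_dec m0 _); lra. }
  assert (Hind : forall j, (j <= N)%nat -> (1 + sigma) ^ j * V 0%nat <= V j).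
  { induction j as [|j IH]; intros Hj.
    - simpl; lra.
    - simpl. specialize (IH ltac:(lia)). specialize (Hstep j ltac:(lia)). nra. }
  assert (Hlow : nu_of T nu (fun s => 0 <= d s < l) <= V 0%nat).
  { apply nu_of_mono; auto. intros s _ [H1 H2].
    unfold c; simpl. split.
    - destruct H1 as [H1|H1]; [left; lra | right; split; auto; lra].
    - left; lra. }
  set (A := (1 + sigma) ^ N).
  assert (HA : 0 < A) by (apply pow_lt; lra).
  set (p := ln (1 + sigma) / ln kappa).
  assert (Hls : 0 < ln (1 + sigma)) by (rewrite <- ln_1; apply ln_increasing; lra).
  assert (Hlk : 0 < ln kappa) by (rewrite <- ln_1; apply ln_increasing; lra).
  assert (Hkey : 1 <= A * (1 + sigma) * Rpower (l / eta) p).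
  { unfold Rpower, A.
    replace ((1 + sigma) ^ N * (1 + sigma)) with ((1 + sigma) ^ S N) by (simpl; ring).
    rewrite <- (exp_ln ((1 + sigma) ^ S N)) by (apply pow_lt; lra).
    rewrite ln_pow by lra. rewrite <- exp_plus.
    assert (0 <= ln (kappa ^ S N * (l / eta))).
    { assert (Hx : 1 <= kappa ^ S N * (l / eta)).
      { apply (Rmult_le_reg_r eta); [lra|].
        replace (kappa ^ S N * (l / eta) * eta) with (l * kappa ^ S N) by (field; lra). lra. }
      rewrite <- ln_1. destruct Hx as [Hx|Hx].
      - apply Rlt_le, ln_increasing; lra.
      - rewrite <- Hx; lra. }
    rewrite ln_mult, ln_pow in H by (try apply pow_lt; try apply Rdiv_lt_0_compat; lra).
    assert (0 <= INR (S N) * ln (1 + sigma) + p * ln (l / eta)).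
    { unfold p.
      replace (INR (S N) * ln (1 + sigma) + ln (1 + sigma) / ln kappa * ln (l / eta))
        with (ln (1 + sigma) / ln kappa * (INR (S N) * ln kappa + ln (l / eta)))
        by (field; lra).
      apply Rmult_le_pos; [apply Rlt_le, Rdiv_lt_0_compat|]; lra. }
    apply Rle_trans with (exp 0); [rewrite exp_0; lra|]. destruct H0 as [H0|H0]; [apply Rlt_le, exp_increasing; lra|].
    rewrite <- H0; lra. }
  assert (HAV : A * V 0%nat < delta0) by (pose proof (Hind N (Nat.le_refl N)); fold A in H; lra).
  assert (Hfin : nu_of T nu (fun s => 0 <= d s < l) < delta0 * (1 + sigma) * Rpower (l / eta) p).
  { apply (Rmult_lt_reg_l A); [lra|]. nra. }
  fold p. lra.
Qed.
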